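(* For every $n\ge1$, $$M_n=U_n\cup\bigcup_{j\ge n}\big((\bar\beta_j-n)+M_0\big).$$
   Context: $K$ is an algebraically closed field, $A=K[x,y]_{(x,y)}$. Set $\bar\beta_0=1$, $\bar\beta_{i+1}=2\bar\beta_i+2^{-(i+1)}$, i.e. $\bar\beta_i=\frac13(2^{i+2}-2^{-i})$. Let $P_0=x$, $P_1=y$, $P_{i+1}=P_i^2-P_0^{2^{i+1}}P_{i-1}$ ($i\ge1$). Let $\bar\nu$ be the valuation of $K(x,y)$ dominating $A$ for which $P_0,P_1,P_2,\dots$ is a (minimal) generating sequence with $\bar\nu(P_i)=\bar\beta_i$; its value group is $\bigcup_{i\ge0}2^{-i}\mathbb Z$ and its semigroup on $A$ is $M_0=\bar\nu(A\setminus\{0\})=\sum_{i\ge0}\mathbb N\bar\beta_i$. Let $z=y/x$, $W_n=\{a_0+a_1z+\cdots+a_nz^n\mid a_j\in K[x,y]\}$, $M_n=\{\bar\nu(f)\mid 0\ne f\in W_n\}$ (an $M_0$-module), and $U_n=\{\lambda\in M_n\mid \lambda=\sum_{j=0}^{n-1}l_j\bar\beta_j$ for some $l_j\in\mathbb Z\}$. *)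

(* Defs.v *)
From HB Require Import structures.
From mathcomp Require Import all_boot all_order all_algebra.
Set Implicit Arguments. Unset Strict Implicit. Unset Printing Implicit Defensive.
Import Order.TTheory GRing.Theory Num.Theory.
Local Open Scope ring_scope.

Section Setup.
Variable K : closedFieldType.

(* K[x,y] realised as {poly {poly K}}: x is the inner variable, y the outer one *)
Definition Kxy := {poly {poly K}}.
Definition Kxy_x : Kxy := ('X)%:P.
Definition Kxy_y : Kxy := 'X.

Definition Kxy_frac := {fraction Kxy}.
Definition emb (f : Kxy) : Kxy_frac := FracField.tofrac f.

Fixpoint Pseq (i : nat) : Kxy * Kxy :=
  match i with
  | 0 => (Kxy_x, Kxy_y)
  | i'.+1 => let (a, b) := Pseq i' in (b, b ^+ 2 - Kxy_x ^+ (2 ^ i'.+2) * a)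
  end.
(* P 0 = x, P 1 = y, P (i+1) = P i ^2 - x^(2^(i+1)) P (i-1) for i >= 1 *)
Definition P (i : nat) : Kxy := (Pseq i).1.

Fixpoint betabar (i : nat) : rat :=
  match i with
  | 0 => 1
  | i'.+1 => 2 * betabar i' + (2 ^+ i'.+1)^-1
  end.

Definition Pmono (e : seq nat) : Kxy := \prod_(i < size e) P i ^+ (nth 0 e i).
Definition mono_val (e : seq nat) : rat := \sum_(i < size e) (nth 0 e i)%:R * betabar i.

(* nu is a valuation of K(x,y) (values of nonzero elements, in Q), trivial on K,
   dominating A = K[x,y]_(x,y), with nu(P_i) = betabar_i and (P_i) a generating
   sequence of nu: for every lambda, the ideal {f in A | nu f >= lambda} is
   generated by the monomials prod P_i^e_i of value >= lambda. *)
Definition is_nubar (nu : Kxy_frac -> rat) : Prop :=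
  (forall a b, a != 0 -> b != 0 -> nu (a * b) = nu a + nu b) /\
      (forall a b, a + b != 0 -> a != 0 -> b != 0 ->
                   Num.min (nu a) (nu b) <= nu (a + b)) /\
      (forall c : K, c != 0 -> nu (emb (c%:P%:P)) = 0) /\
      (* dominates A: nonnegative on A, positive on the maximal ideal *)
      (forall f : Kxy, f != 0 -> 0 <= nu (emb f)) /\
      (forall f : Kxy, f != 0 -> f.[0].[0] = 0 -> 0 < nu (emb f)) /\
      (forall i, nu (emb (P i)) = betabar i) /\
      (forall (lam : rat) (f : Kxy), f != 0 -> lam <= nu (emb f) ->
         exists (s : Kxy) (t : seq (Kxy * seq nat)),
           [/\ s.[0].[0] != 0,
               all (fun p => lam <= mono_val p.2) t &
               s * f = \sum_(p <- t) p.1 * Pmono p.2]).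

Definition zz : Kxy_frac := emb Kxy_y / emb Kxy_x.
Definition W (n : nat) (f : Kxy_frac) : Prop :=
  exists a : nat -> Kxy, f = \sum_(j < n.+1) emb (a j) * zz ^+ j.

Definition M (nu : Kxy_frac -> rat) (n : nat) (lam : rat) : Prop :=
  exists f, [/\ W n f, f != 0 & nu f = lam].

Definition U (nu : Kxy_frac -> rat) (n : nat) (lam : rat) : Prop :=
  M nu n lam /\ exists l : nat -> int, lam = \sum_(j < n) (l j)%:~R * betabar j.

End Setup.

(* Main.v *)
Require Import Defs.
From HB Require Import structures.
From mathcomp Require Import all_boot all_order all_algebra.
Import Order.TTheory GRing.Theory Num.Theory.
Local Open Scope ring_scope.

Fixpoint Id (K : closedFieldType) (n : nat) (g : Kxy K) : Prop :=
  match n with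
  | 0 => True
  | n'.+1 => exists u v, Id K n' u /\ Id K n' v /\ g = Kxy_x K * u + Kxy_y K * v
  end.
Arguments Id {K} n g.

Lemma Id_mul (K : closedFieldType) n (g c : Kxy K) : Id n g -> Id n (c * g).
Proof.
elim: n g => [//|n IH] g /= [u [v [hu [hv ->]]]].
exists (c * u), (c * v); split; [exact: IH|split; [exact: IH|]].
by rewrite mulrDr (mulrCA c (Kxy_x K)) (mulrCA c (Kxy_y K)).
Qed.

Lemma Id_add (K : closedFieldType) n (g h : Kxy K) : Id n g -> Id n h -> Id n (g + h).
Proof.
elim: n g h => [//|n IH] g h /= [u [v [hu [hv ->]]]] [u' [v' [hu' [hv' ->]]]].
exists (u + u'), (v + v'); split; [exact: IH|split; [exact: IH|]].
by rewrite !mulrDr addrACA.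
Qed.

Lemma Id_sub (K : closedFieldType) n (g h : Kxy K) : Id n g -> Id n h -> Id n (g - h).
Proof.
move=> hg hh; apply: Id_add => //; rewrite -mulN1r; exact: Id_mul.
Qed.

Lemma Id0 (K : closedFieldType) n : Id n (0 : Kxy K).
Proof.
elim: n => [//|n IH] /=; exists 0, 0; split => //; split => //.
by rewrite !mulr0 addr0.
Qed.

Lemma Id_S (K : closedFieldType) n (g : Kxy K) : Id n.+1 g -> Id n g.
Proof.
elim: n g => [//|n IH] g /= [u [v [hu [hv ->]]]].
exists u, v; split; [exact: IH|split; [exact: IH|by []]].
Qed.

Lemma Id_le (K : closedFieldType) m n (g : Kxy K) : (m <= n)%N -> Id n g -> Id m g.
Proof.
move=> /subnK <-; elim: (n - m)%N => [//|k IH] h.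
apply: IH; apply: Id_S; exact: h.
Qed.

Lemma Id_xpow (K : closedFieldType) m : Id m (Kxy_x K ^+ m).
Proof.
elim: m => [//|m IH] /=; exists (Kxy_x K ^+ m), 0; split => //; split; first exact: Id0.
by rewrite mulr0 addr0 exprS.
Qed.

Lemma Id_y (K : closedFieldType) : Id 1 (Kxy_y K).
Proof. simpl; exists 0, 1; split => //; split => //; by rewrite mulr0 add0r mulr1. Qed.

Lemma Id_mulI (K : closedFieldType) a b (g h : Kxy K) :
  Id a g -> Id b h -> Id (a + b) (g * h).
Proof.
elim: a g => [|a IH] g.
  move=> _ hh; rewrite add0n; exact: Id_mul.
move=> [u [v [hu [hv ->]]]] hh.
exists (u * h), (v * h); split; [exact: IH|split; [exact: IH|]].
by rewrite mulrDl !mulrA.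
Qed.

Lemma P0E (K : closedFieldType) : P K 0 = Kxy_x K. Proof. by []. Qed.
Lemma P1E (K : closedFieldType) : P K 1 = Kxy_y K. Proof. by []. Qed.
Lemma PSSE (K : closedFieldType) i :
  (P K i.+2 : {poly {poly K}}) = (P K i.+1 : {poly {poly K}}) ^+ 2 - (Kxy_x K : {poly {poly K}}) ^+ (2 ^ i.+2) * P K i.
Proof.
rewrite /P /=.
by case: (Pseq K i) => a b /=.
Qed.

Lemma Id_P (K : closedFieldType) i : Id i.+1 (P K i.+1).
Proof.
elim: i => [|i IH]; first by rewrite P1E; exact: Id_y.
rewrite PSSE; apply: Id_sub.
  apply: (@Id_le _ _ (i.+1 + i.+1)); first by rewrite addnS ltnS leq_addr.
  by rewrite expr2; apply: Id_mulI.
rewrite mulrC; apply: Id_mul; apply: (@Id_le _ _ (2 ^ i.+2)).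
  by apply: ltnW; apply: ltn_expl.
exact: Id_xpow.
Qed.

Definition phi0 (K : closedFieldType) (p : {poly {poly K}}) : {poly K} :=
 
  map_poly (horner_eval (0 : K)) p.
Arguments phi0 {K} p.
Lemma phi0M (K : closedFieldType) (a b : {poly {poly K}}) : phi0 (a * b) = phi0 a * phi0 b.
Proof. exact: rmorphM. Qed.
Lemma phi0B (K : closedFieldType) (a b : {poly {poly K}}) : phi0 (a - b) = phi0 a - phi0 b.
Proof. exact: rmorphB. Qed.
Lemma phi00 (K : closedFieldType) : phi0 (0 : {poly {poly K}}) = 0.
Proof. exact: rmorph0. Qed.

Lemma P_neq0 (K : closedFieldType) i : P K i != 0.
Proof.
case: i => [|i].
  by rewrite P0E /Kxy_x polyC_eq0 polyX_eq0.
have phix : phi0 (Kxy_x K) = 0 by rewrite /phi0 /Kxy_x map_polyC /= horner_evalE hornerX.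
have phiy : phi0 (Kxy_y K) = 'X by rewrite /phi0 /Kxy_y map_polyX.
suff H : phi0 (P K i.+1) = 'X ^+ (2 ^ i).
  apply/eqP => H0; move: H; rewrite H0 phi00 => /eqP; by rewrite eq_sym expf_eq0 polyX_eq0 andbF.
elim: i => [|i IH]; first by rewrite P1E phiy expn0 expr1.
rewrite PSSE phi0B expr2 !phi0M IH.
have -> : (2 ^ i.+2 = (2 ^ i.+2).-1.+1)%N by rewrite prednK // expn_gt0.
rewrite exprS phi0M phix !mul0r subr0 -expr2.
by rewrite -exprM expnS mulnC.
Qed.

Section V.
Variable K : closedFieldType.
Variable nu : Kxy_frac K -> rat.
Hypothesis hnu : is_nubar nu.

Let F := Kxy_frac K.

Lemma nuM (a b : F) : a != 0 -> b != 0 -> nu (a * b) = nu a + nu b.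
Proof. by move: hnu => [h _]; apply: h. Qed.
Lemma nuD (a b : F) : a + b != 0 -> a != 0 -> b != 0 -> Num.min (nu a) (nu b) <= nu (a + b).
Proof. by move: hnu => [_ [h _]]; apply: h. Qed.
Lemma nuC (c : K) : c != 0 -> nu (emb (c%:P%:P)) = 0.
Proof. by move: hnu => [_ [_ [h _]]]; apply: h. Qed.
Lemma nu_pos (f : Kxy K) : f != 0 -> 0 <= nu (emb f).
Proof. by move: hnu => [_ [_ [_ [h _]]]]; apply: h. Qed.
Lemma nu_max (f : Kxy K) : f != 0 -> f.[0].[0] = 0 -> 0 < nu (emb f).
Proof. by move: hnu => [_ [_ [_ [_ [h _]]]]]; apply: h. Qed.
Lemma nuP i : nu (emb (P K i)) = betabar i.
Proof. by move: hnu => [_ [_ [_ [_ [_ [h _]]]]]]; apply: h. Qed.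
Lemma nu_gen (lam : rat) (f : Kxy K) : f != 0 -> lam <= nu (emb f) ->
         exists (s : Kxy K) (t : seq (Kxy K * seq nat)),
           [/\ s.[0].[0] != 0,
               all (fun p => lam <= mono_val p.2) t &
               s * f = \sum_(p <- t) p.1 * Pmono K p.2].
Proof. by move: hnu => [_ [_ [_ [_ [_ [_ h]]]]]]; apply: h. Qed.

Lemma emb_eq0 (f : Kxy K) : (emb f == 0) = (f == 0).
Proof. exact: tofrac_eq0. Qed.

Lemma nuN1 : nu (-1) = 0.
Proof.
have := @nuC (-1); rewrite oppr_eq0 oner_neq0 => /(_ isT).
by rewrite /emb polyCN polyCN !polyC1 tofracN tofrac1.
Qed.

Lemma nuN (a : F) : a != 0 -> nu (- a) = nu a.
Proof.
move=> a0.
have m1 : (-1 : F) != 0 by rewrite oppr_eq0 oner_neq0.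
have -> : - a = -1 * a by rewrite mulN1r.
by rewrite (nuM (-1) a m1 a0) nuN1 add0r.
Qed.

Lemma nu_strict (a b : F) : a != 0 -> b != 0 -> nu a < nu b -> nu (a + b) = nu a.
Proof.
move=> a0 b0 lt.
have ab0 : a + b != 0.
  rewrite addr_eq0; apply/negP => /eqP hb.
  by move: lt; rewrite hb (nuN b b0) ltxx.
have nb0 : - b != 0 by rewrite oppr_eq0; exact: b0.
have h1 := nuD a b ab0 a0 b0.
have h2 : Num.min (nu (a + b)) (nu (- b)) <= nu (a + b + - b).
  apply: nuD; [rewrite addrK; exact: a0 | exact: ab0 | exact: nb0].
rewrite addrK (nuN b b0) in h2.
rewrite ge_min in h1; rewrite ge_min in h2.
have h1' : nu a <= nu (a + b).
  case/orP: h1 => // h; exact: le_trans (ltW lt) h.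
have h2' : nu (a + b) <= nu a.
  case/orP: h2 => // h; move: lt; rewrite ltNge h; by [].
apply/eqP; rewrite eq_le h1' h2'; by [].
Qed.

Lemma nu1 : nu 1 = 0.
Proof.
have := @nuC 1; rewrite oner_neq0 => /(_ isT).
by rewrite /emb !polyC1 tofrac1.
Qed.

Lemma embx0 : emb (Kxy_x K) != 0.
Proof. rewrite emb_eq0; exact: (P_neq0 K 0). Qed.

Lemma nu_x : nu (emb (Kxy_x K)) = 1.
Proof. exact: (nuP 0). Qed.

Lemma nuX (a : F) k : a != 0 -> nu (a ^+ k) = k%:R * nu a.
Proof.
move=> a0; elim: k => [|k IH]; first by rewrite expr0 nu1 mul0r.
rewrite exprS (nuM a (a ^+ k) a0 (expf_neq0 k a0)) IH.
by rewrite -{1}(mul1r (nu a)) -mulrDl -natr1 addrC.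
Qed.

Lemma nu_prod m (G : 'I_m -> F) : (forall i, G i != 0) ->
  nu (\prod_(i < m) G i) = \sum_(i < m) nu (G i).
Proof.
elim: m G => [|m IH] G hG; first by rewrite !big_ord0 nu1.
rewrite !big_ord_recr /=.
have h1 : \prod_(i < m) G (widen_ord (leqnSn m) i) != 0.
  apply/prodf_neq0 => i _; exact: hG.
rewrite (nuM _ _ h1 (hG _)) IH; first by []. move=> i; exact: hG.
Qed.

Lemma Pmono_neq0 e : Pmono K e != 0.
Proof. rewrite /Pmono; apply/prodf_neq0 => i _; apply: expf_neq0; exact: P_neq0. Qed.

Lemma nu_Pmono e : nu (emb (Pmono K e)) = mono_val e.
Proof.
have -> : emb (Pmono K e) = \prod_(i < size e) (emb (P K i)) ^+ (nth 0 e i).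
  rewrite /emb /Pmono rmorph_prod; apply: eq_bigr => i _; exact: rmorphXn.
rewrite nu_prod; last first.
  move=> i; apply: expf_neq0; rewrite emb_eq0; exact: P_neq0.
rewrite /mono_val; apply: eq_bigr => i _.
rewrite nuX ?nuP; first by [].
rewrite emb_eq0; exact: P_neq0.
Qed.

Lemma nu_unit (s : Kxy K) : s.[0].[0] != 0 -> nu (emb s) = 0.
Proof.
move=> hs; set c := s.[0].[0].
have -> : s = c%:P%:P + (s - c%:P%:P) by rewrite addrC subrK.
have hc : emb (c%:P%:P) != 0 by rewrite emb_eq0 polyC_eq0 polyC_eq0; exact: hs.
case: (eqVneq (s - c%:P%:P) 0) => hd.
  rewrite hd addr0; exact: nuC.
have hlt : 0 < nu (emb (s - c%:P%:P)).
  apply: nu_max; first exact: hd.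
  by rewrite !hornerE /c subrr.
have hd' : emb (s - c%:P%:P) != 0 by rewrite emb_eq0; exact: hd.
have e : emb (c%:P%:P + (s - c%:P%:P)) = emb (c%:P%:P) + emb (s - c%:P%:P) by exact: rmorphD.
rewrite e (nu_strict _ _ hc hd'); first exact: nuC.
rewrite nuC; first exact: hlt. exact: hs.
Qed.

Lemma nu_sum_gt (T : eqType) (t : seq T) (G : T -> F) (c : rat) :
  (forall p, p \in t -> G p != 0 -> c < nu (G p)) ->
  \sum_(p <- t) G p != 0 -> c < nu (\sum_(p <- t) G p).
Proof.
elim: t => [|q t IH] hG; first by rewrite big_nil eqxx.
rewrite big_cons => hs.
have hG' : forall p, p \in t -> G p != 0 -> c < nu (G p).
  move=> p hp; apply: hG; rewrite inE hp orbT; by [].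
case: (eqVneq (G q) 0) => hq.
  rewrite hq add0r; apply: IH; first exact: hG'.
  by move: hs; rewrite hq add0r.
case: (eqVneq (\sum_(p <- t) G p) 0) => hr.
  rewrite hr addr0; apply: hG; [by rewrite inE eqxx | exact: hq].
have := nuD _ _ hs hq hr.
have h1 := hG q (mem_head q t) hq.
have h2 := IH hG' hr.
move=> h; apply: (lt_le_trans _ h); rewrite lt_min h1 h2; by [].
Qed.

Lemma nu_mono (f : Kxy K) : f != 0 -> exists e, nu (emb f) = mono_val e.
Proof.
move=> f0.
have [s [t [hs hall hst]]] := nu_gen (nu (emb f)) f f0 (lexx (nu (emb f))).
set lam := nu (emb f) in hall *.
case: (boolP (has (fun p => (p.1 != 0) && (mono_val p.2 <= lam)) t)).
  case/hasP => p hp /andP [_ hle]; exists p.2.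
  have := allP hall p hp => /= hge; apply/eqP; rewrite eq_le hle hge; by [].
move=> hno; exfalso.
have sf0 : emb (s * f) != 0.
  rewrite emb_eq0 mulf_eq0 negb_or f0 andbT.
  apply/eqP => s0; move: hs; rewrite s0 !horner0 eqxx; by [].
have hnu_sf : nu (emb (s * f)) = lam.
  have e : emb (s * f) = emb s * emb f by exact: rmorphM.
  rewrite e nuM; last first.
    - rewrite emb_eq0; exact: f0.
    - rewrite emb_eq0; apply/eqP => s0; move: hs; rewrite s0 !horner0 eqxx; by [].
  rewrite nu_unit; first by rewrite add0r. exact: hs.
have e2 : emb (s * f) = \sum_(p <- t) emb (p.1 * Pmono K p.2).
  rewrite hst; exact: rmorph_sum.
have : lam < nu (emb (s * f)).
  rewrite e2; apply: nu_sum_gt; last by rewrite -e2.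
  move=> p hp hp0.
  have p10 : p.1 != 0 by apply/eqP => h; move: hp0; rewrite h mul0r /emb tofrac0 eqxx.
  have em : emb (p.1 * Pmono K p.2) = emb p.1 * emb (Pmono K p.2) by exact: rmorphM.
  rewrite em nuM; last first.
    - rewrite emb_eq0; exact: Pmono_neq0.
    - rewrite emb_eq0; exact: p10.
  rewrite nu_Pmono.
  have hlt : lam < mono_val p.2.
    rewrite ltNge; apply/negP => hle; move/hasPn: hno => /(_ p hp) /=.
    rewrite p10 hle; by [].
  apply: (lt_le_trans hlt); rewrite lerDr; apply: nu_pos; exact: p10.
rewrite hnu_sf ltxx; by [].
Qed.
End V.

Section W.
Variable K : closedFieldType.
Let F := Kxy_frac K.
Let x' : F := emb (Kxy_x K).
Let y' : F := emb (Kxy_y K).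

Lemma x'0 : x' != 0.
Proof. rewrite /x' emb_eq0; exact: (P_neq0 K 0). Qed.

Lemma W_add n (f g : F) : W n f -> W n g -> W n (f + g).
Proof.
move=> [a ->] [b ->]; exists (fun k => a k + b k).
rewrite -big_split; apply: eq_bigr => k _ /=.
have -> : emb (a k + b k) = emb (a k) + emb (b k) by exact: rmorphD.
rewrite mulrDl; reflexivity.
Qed.

Lemma W_S n (f : F) : W n f -> W n.+1 f.
Proof.
move=> [a ->]; exists (fun k => if k == n.+1 then 0 else a k).
symmetry; rewrite big_ord_recr /= eqxx /emb tofrac0 mul0r addr0.
apply: eq_bigr => k _ /=; rewrite ifN; first by [].
by rewrite neq_ltn (ltn_ord k).
Qed.

Lemma W_zz n (f : F) : W n f -> W n.+1 (zz K * f).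
Proof.
move=> [a ->]; exists (fun k => if k is k'.+1 then a k' else 0).
symmetry; rewrite big_ord_recl /= /emb tofrac0 mul0r add0r mulr_sumr.
apply: eq_bigr => k _ /=; rewrite exprS mulrCA; by [].
Qed.

Lemma Id_W n (g : Kxy K) : Id n g -> W n (emb g / x' ^+ n).
Proof.
elim: n g => [|n IH] g.
  move=> _; exists (fun _ => g); rewrite big_ord1 expr0 invr1 !mulr1; by [].
move=> [u [v [hu [hv ->]]]].
have e : emb (Kxy_x K * u + Kxy_y K * v) = x' * emb u + y' * emb v.
  rewrite /x' /y' /emb rmorphD !rmorphM; by [].
rewrite e.
have -> : (x' * emb u + y' * emb v) / x' ^+ n.+1 =
   emb u / x' ^+ n + zz K * (emb v / x' ^+ n).
  rewrite /zz -/y' -/x' exprS invfM mulrDl.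
  congr (_ + _).
    rewrite [x' * _]mulrC -mulrA [x' * (_ * _)]mulrA (mulfV x'0) mul1r; reflexivity.
  rewrite -!mulrA; congr (_ * _); exact: mulrCA.
apply: W_add; first by apply: W_S; apply: IH.
apply: W_zz; exact: IH.
Qed.

Lemma W_clear n (f : F) : W n f -> exists g : Kxy K, x' ^+ n * f = emb g.
Proof.
move=> [a ->].
exists (\sum_(k < n.+1) (a k * Kxy_x K ^+ (n - k) * Kxy_y K ^+ k)).
have -> : emb (\sum_(k < n.+1) (a k * Kxy_x K ^+ (n - k) * Kxy_y K ^+ k)) =
   \sum_(k < n.+1) (emb (a k) * x' ^+ (n - k) * y' ^+ k).
  rewrite /emb rmorph_sum; apply: eq_bigr => k _.
  rewrite !rmorphM !rmorphXn; reflexivity.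
rewrite mulr_sumr; apply: eq_bigr => k _.
have hk : (k <= n)%N by rewrite -ltnS (ltn_ord k).
have hz : zz K * x' = y' by rewrite /zz -/x' -/y' (divfK x'0).
rewrite -{1}(subnK hk) exprD -mulrA [x' ^+ k * _]mulrCA -exprMn [x' * _]mulrC hz.
rewrite mulrCA mulrA; reflexivity.
Qed.
End W.

Lemma mono_valE e : mono_val e = \sum_(0 <= i < size e) (nth 0 e i)%:R * betabar i.
Proof. by rewrite /mono_val big_mkord. Qed.

Lemma sum_trunc (G : nat -> rat) m1 m2 : (m1 <= m2)%N ->
  (forall i, (m1 <= i < m2)%N -> G i = 0) ->
  \sum_(0 <= i < m2) G i = \sum_(0 <= i < m1) G i.
Proof.
move=> h H; rewrite (big_cat_nat (leq0n m1) h) /=.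
have -> : \sum_(m1 <= i < m2) G i = 0.
  rewrite big_nat_cond; apply: big1 => i /andP [hi _]; exact: H.
by rewrite addr0.
Qed.

Lemma mono_val_dec e j : (j < size e)%N -> (0 < nth 0 e j)%N ->
  mono_val e = betabar j + mono_val (set_nth 0 e j (nth 0 e j).-1).
Proof.
move=> hj hpos; rewrite !mono_valE size_set_nth (maxn_idPr hj).
have -> : \sum_(0 <= i < size e) (nth 0 e i)%:R * betabar i =
  \sum_(0 <= i < size e) ((i == j)%:R * betabar i +
       (nth 0 (set_nth 0 e j (nth 0 e j).-1) i)%:R * betabar i).
  apply: eq_bigr => i _; rewrite nth_set_nth /=.
  case: eqP => [->|_]; last by rewrite mul0r add0r.
  by rewrite -{1}(prednK hpos) -addn1 natrD mulrDl mul1r addrC.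
rewrite big_split /=; congr (_ + _).
rewrite (bigD1_seq j) /=; last exact: iota_uniq.
  rewrite eqxx mul1r big1 ?addr0 // => i /negPf ->; by rewrite mul0r.
rewrite mem_iota; apply/andP; split => //; rewrite ?subn0 ?add0n; exact: hj.
Qed.

Lemma mono_val_U e n : (1 <= n)%N ->
  (forall j, (n <= j < size e)%N -> nth 0 e j = 0%N) ->
  exists l : nat -> int, mono_val e - n%:R = \sum_(j < n) (l j)%:~R * betabar j.
Proof.
move=> hn hz.
have -> : mono_val e = \sum_(0 <= i < n) (nth 0 e i)%:R * betabar i.
  rewrite mono_valE.
  have h1 := @sum_trunc (fun i => (nth 0 e i)%:R * betabar i) (size e) (maxn n (size e)) (leq_maxr _ _).
  have h2 := @sum_trunc (fun i => (nth 0 e i)%:R * betabar i) n (maxn n (size e)) (leq_maxl _ _).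
  rewrite -h1; last first.
    move=> i /andP [hi _]; by rewrite nth_default // mul0r.
  rewrite h2 //.
  move=> i /andP [hi hi2]; case: (ltnP i (size e)) => hs.
    by rewrite hz ?hi ?hs // mul0r.
  by rewrite nth_default // mul0r.
exists (fun j => if j == 0%N then (nth 0 e 0)%:Z - n%:Z else (nth 0 e j)%:Z).
case: n hn hz => [//|n] _ _.
rewrite big_mkord !big_ord_recl /= intrB.
rewrite !mulr1 addrAC; congr (_ + _).
Qed.

Theorem mainTheorem14 (K : closedFieldType) (nu : Kxy_frac K -> rat)
  (hnu : is_nubar nu) (n : nat) (hn : (1 <= n)%N) (lam : rat) :
  M nu n lam <->
  (U nu n lam \/
   exists j : nat, (n <= j)%N /\
     exists mu : rat, M nu 0 mu /\ lam = (betabar j - n%:R) + mu).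
Proof.
have x0 := x'0 K.
have hxn : nu (emb (Kxy_x K) ^+ n) = n%:R.
  rewrite (@nuX K nu hnu _ n x0) (@nu_x K nu hnu) mulr1; reflexivity.
split.
- move=> hM; case: (hM) => f [hW f0 hf].
  have [g hg] := @W_clear K n f hW.
  have g0 : g != 0.
    have hh := mulf_neq0 (expf_neq0 n x0) f0.
    move: hh; rewrite hg emb_eq0; exact: id.
  have hnug : nu (emb g) = n%:R + lam.
    rewrite -hg (@nuM K nu hnu _ _ (expf_neq0 n x0) f0) hxn hf; reflexivity.
  have [e he] := @nu_mono K nu hnu g g0.
  have hlam : lam = mono_val e - n%:R.
    rewrite -he hnug addrC addKr; reflexivity.
  case: (boolP [exists j : 'I_(size e), (n <= j)%N && (0 < nth 0 e j)%N]).
    move=> /existsP [j /andP [hj hpos]]; right; exists j; split; first exact: hj.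
    set e' := set_nth 0 e j (nth 0 e j).-1.
    exists (mono_val e'); split.
      exists (emb (Pmono K e')); split.
      + exists (fun _ => Pmono K e'); rewrite big_ord1 expr0 mulr1; reflexivity.
      + rewrite emb_eq0; exact: Pmono_neq0.
      + exact: (@nu_Pmono K nu hnu).
    rewrite hlam (@mono_val_dec e j (ltn_ord j) hpos) -/e'.
    rewrite addrAC; reflexivity.
  move=> hno; left; split; first exact: hM.
  rewrite hlam; apply: mono_val_U; first exact: hn.
  move=> j /andP [hj1 hj2]; apply/eqP; rewrite -leqn0 leqNgt; apply/negP => hpos.
  move/existsP: hno; apply; exists (Ordinal hj2); rewrite /= hj1 hpos; by [].
- case.
    by case.
  move=> [j [hj [mu [[f0 [[a ha] f00 hf0]] ->]]]].
  move: ha; rewrite big_ord1 expr0 mulr1 => ha.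
  set h := a 0%N.
  have h0 : h != 0 by rewrite -(@emb_eq0 K) -ha; exact: f00.
  have hPj : Id n (P K j).
    case: j hj => [|j] hj; first by move: (leq_trans hn hj).
    apply: (@Id_le K n j.+1 _ hj); exact: Id_P.
  set f := emb (P K j * h) / emb (Kxy_x K) ^+ n.
  exists f; split.
  + apply: Id_W; rewrite mulrC; apply: Id_mul; exact: hPj.
  + rewrite /f; apply: mulf_neq0.
      rewrite emb_eq0; apply: mulf_neq0; [exact: P_neq0 | exact: h0].
    exact: (invr_neq0 (expf_neq0 n x0)).
  + have e1 : emb (P K j * h) = f * emb (Kxy_x K) ^+ n.
      rewrite /f (divfK (expf_neq0 n x0)); reflexivity.
    have f_0 : f != 0.
      rewrite /f; apply: mulf_neq0.
        rewrite emb_eq0; apply: mulf_neq0; [exact: P_neq0 | exact: h0].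
      exact: (invr_neq0 (expf_neq0 n x0)).
    have hh := @nuM K nu hnu _ _ f_0 (expf_neq0 n x0).
    rewrite -e1 hxn in hh.
    have e2 : emb (P K j * h) = emb (P K j) * emb h by exact: rmorphM.
    have n1 : emb (P K j) != 0 by rewrite emb_eq0; exact: P_neq0.
    have n2 : emb h != 0 by rewrite -ha; exact: f00.
    rewrite e2 (@nuM K nu hnu _ _ n1 n2) (@nuP K nu hnu j) -ha hf0 in hh.
    rewrite addrAC hh addrK; reflexivity.
Qed.
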